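(* Let $\mathcal{Y}$ be an outcome space and, for each $s=(s^{(1)},\dots,s^{(n)})^\intercal\in\mathbb{R}^n$, let $f(\cdot\mid s)$ be a probability mass function (or density) on $\mathcal{Y}$ such that $f(y\mid s)$ is twice differentiable in $s$, its support does not depend on $s$, $s\mapsto\ln f(y\mid s)$ is strictly concave for each $y$ in the support, and differentiation with respect to $s$ and integration (summation) over $y$ of $f(y\mid s)$ are interchangeable. For $r\in\mathbb{R}^n$ define the score $\nabla_i(r;y)=\partial \ln f(y\mid r)/\partial r^{(i)}$. Let $s\in\mathbb{R}^n$ (true skills) and $r\in\mathbb{R}^n$ (ratings) satisfy $r^{(j)}=s^{(j)}$ for all $j\neq i$, and let $Y$ have distribution $f(\cdot\mid s)$. Then $\mathrm{E}[\nabla_i(r;Y)\mid s]$ has the same sign as $s^{(i)}-r^{(i)}$ (positive, zero, or negative).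
   Context: Each player $i$ has an unobserved true skill $s^{(i)}$; game outcomes are generated by $f(\cdot\mid s)$, while ratings $r$ are updated by the score-driven rule $r_{t+1}^{(i)}=r_t^{(i)}+K\nabla_i(r_t;y_t)$, $K>0$, without knowledge of $s$. Expectations are with respect to $Y\sim f(\cdot\mid s)$. *)

(* Defs.v *)
From HB Require Import structures.
From mathcomp Require Import all_boot all_order all_algebra.
From mathcomp Require Import all_classical all_reals all_analysis.
Set Implicit Arguments. Unset Strict Implicit. Unset Printing Implicit Defensive.
Import Order.TTheory GRing.Theory Num.Theory.
Import numFieldNormedType.Exports.
Local Open Scope classical_set_scope.
Local Open Scope ring_scope.

Definition unitv {R : realType} {n : nat} (i : 'I_n) : 'rV[R]_n := delta_mx 0 i.

Definition partial {R : realType} {n : nat} (i : 'I_n) (g : 'rV[R]_n -> R)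
  (x : 'rV[R]_n) : R := 'D_(unitv i) g x.

Definition twice_differentiable {R : realType} {n : nat} (g : 'rV[R]_n -> R) :=
  forall x, differentiable g x /\
    forall i : 'I_n, differentiable (partial i g) x.

Definition strictly_concave {R : realType} {n : nat} (g : 'rV[R]_n -> R) :=
  forall a b : 'rV[R]_n, a != b -> forall t : R, 0 < t < 1 ->
    (1 - t) * g a + t * g b < g ((1 - t) *: a + t *: b).

Definition score {R : realType} {Y : Type} {n : nat}
  (f : Y -> 'rV[R]_n -> R) (i : 'I_n) (r : 'rV[R]_n) (y : Y) : R :=
  partial i (fun r' => ln (f y r')) r.

(* Standing assumptions on the family of densities f(. | s) w.r.t. a
   reference measure mu on the outcome space Y (counting measure for pmfs). *)
Definition regular_model {R : realType} {d : measure_display}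
  {Y : measurableType d} (mu : {measure set Y -> \bar R}) {n : nat}
  (f : Y -> 'rV[R]_n -> R) : Prop :=
  (forall y s, 0 <= f y s) /\
      (forall s, measurable_fun setT (fun y => f y s)) /\
      (forall s, (\int[mu]_y (f y s)%:E = 1)%E) /\
      (forall y, twice_differentiable (f y)) /\
      (forall y s s', (0 < f y s) = (0 < f y s')) /\
      (forall y s, 0 < f y s -> strictly_concave (fun s' => ln (f y s'))) /\
      (forall s (i : 'I_n),
         mu.-integrable setT (fun y => (partial i (f y) s)%:E) /\
         is_derive s (unitv i) (fun s' => Rintegral mu setT (fun y => f y s'))
                   (Rintegral mu setT (fun y => partial i (f y) s))).

(* Main.v *)
Require Import Defs.
From HB Require Import structures.
From mathcomp Require Import all_boot all_order all_algebra.
From mathcomp Require Import all_classical all_reals all_analysis.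
From mathcomp Require Import ring lra measurable_realfun.
Set Implicit Arguments. Unset Strict Implicit. Unset Printing Implicit Defensive.
Import Order.TTheory GRing.Theory Num.Theory.
Import numFieldNormedType.Exports.
Local Open Scope classical_set_scope.
Local Open Scope ring_scope.
Section S.
Variable R : realType.
Lemma dnbhs_right : (0:R)^'+ `=>` (0:R)^'.
Proof.
move=> A; rewrite /dnbhs /within /=.
move=> HA. apply: filterS HA => y Hy y0; apply: Hy; exact: lt0r_neq0.
Qed.
Lemma D_right (psi : R -> R) (a D m del : R) : is_derive a 1 psi D -> 0 < del ->
  (forall h, 0 < h < del -> m <= (psi (h + a) - psi a) / h) -> m <= D.
Proof.
move=> [dv <-] d0 H.
have c : (fun h => h^-1 *: ((psi \o shift a) (h *: 1) - psi a)) @ (0:R)^' --> 'D_1 psi a.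
  exact: dv.
have c2 := cvg_trans (cvg_app _ dnbhs_right) c.
apply: (cvgr_to_ge c2).
near=> h.
rewrite /=. have -> : h%:A = h by rewrite /GRing.scale /= mulr1.
rewrite [_ *: _]mulrC; apply: H.
apply/andP; split.
  near: h; exact: nbhs_right_gt.
near: h; exact: nbhs_right_lt.
Unshelve. all: by end_near. Qed.
Lemma dnbhs_left : (0:R)^'- `=>` (0:R)^'.
Proof.
move=> A; rewrite /dnbhs /within /=.
move=> HA. apply: filterS HA => y Hy y0; apply: Hy; exact: ltr0_neq0.
Qed.
Lemma D_left (psi : R -> R) (a D m del : R) : is_derive a 1 psi D -> 0 < del ->
  (forall h, 0 < h < del -> (psi a - psi (a - h)) / h <= m) -> D <= m.
Proof.
move=> [dv <-] d0 H.
have c : (fun h => h^-1 *: ((psi \o shift a) (h *: 1) - psi a)) @ (0:R)^' --> 'D_1 psi a.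
  exact: dv.
have c2 := cvg_trans (cvg_app _ dnbhs_left) c.
apply: (cvgr_to_le c2).
near=> h.
rewrite /=. have -> : h%:A = h by rewrite /GRing.scale /= mulr1.
have hn : h < 0 by near: h; exact: nbhs_left_lt.
have hd : - del < h by near: h; apply: nbhs_left_gt; rewrite oppr_lt0.
have := H (- h); rewrite oppr_gt0 hn ltrNl hd opprK => /(_ isT).
move=> hh; suff -> : h^-1 *: (psi (h + a) - psi a) = (psi a - psi (a + h)) / - h by [].
by rewrite [_ *: _]mulrC invrN mulrN -mulNr opprB (addrC h).
Unshelve. all: by end_near. Qed.

Definition sconc (psi : R -> R) := forall x y t, x != y -> 0 < t < 1 ->
  (1 - t) * psi x + t * psi y < psi ((1 - t) * x + t * y).

Lemma sconc_deriv (psi : R -> R) (a b Da Db : R) : sconc psi ->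
  is_derive a 1 psi Da -> is_derive b 1 psi Db -> a < b -> Db < Da.
Proof.
move=> sc ha hb ab.
pose c := (a + b) / 2.
have ac : a < c by rewrite /c; lra.
have cb : c < b by rewrite /c; lra.
have h1 : (psi c - psi a) / (c - a) <= Da.
  apply: (D_right ha (del := c - a)); first lra.
  move=> h /andP[h0 hc].
  have ca0 : 0 < c - a by lra.
  pose t := h / (c - a).
  have t0 : 0 < t < 1.
    by rewrite /t divr_gt0 //= ltr_pdivrMr // mul1r.
  have := sc a c t (negbT (lt_eqF ac)) t0.
  have -> : (1 - t) * a + t * c = h + a.
    rewrite /t; field; lra.
  move=> /ltW hh.
  rewrite ler_pdivlMr // mulrAC.
  rewrite -mulrA -/t; lra.
have h2 : Db <= (psi b - psi c) / (b - c).
  apply: (D_left hb (del := b - c)); first lra.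
  move=> h /andP[h0 hc].
  have bc0 : 0 < b - c by lra.
  pose t := 1 - h / (b - c).
  have t0 : 0 < t < 1.
    rewrite /t; apply/andP; split.
      by rewrite subr_gt0 ltr_pdivrMr // mul1r.
    by rewrite ltrBlDr ltrDl divr_gt0.
  have := sc c b t (negbT (lt_eqF cb)) t0.
  have -> : (1 - t) * c + t * b = b - h.
    rewrite /t; field; lra.
  move=> /ltW hh.
  rewrite ler_pdivrMr // mulrAC.
  have e : h / (b - c) = 1 - t by rewrite /t; lra.
  rewrite -mulrA e; lra.
have h3 : (psi b - psi c) / (b - c) < (psi c - psi a) / (c - a).
  have e : b - c = c - a by rewrite /c; lra.
  rewrite e ltr_pM2r ?invr_gt0 ?subr_gt0 //.
  have := sc a b (1/2) (negbT (lt_eqF ab)) (ltac:(apply/andP; split; lra)).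
  have -> : (1 - 1/2) * a + 1/2 * b = c by rewrite /c; lra.
  lra.
lra.
Qed.
End S.
Section M.
Variable R : realType.
Variable n : nat.
Implicit Types (F : 'rV[R]_n -> R) (e b : 'rV[R]_n).

Lemma dq_line F e b (t : R) :
  (fun h : R => h^-1 *: (((fun u : R => F (u *: e + b)) \o shift t) (h *: 1) - F (t *: e + b)))
  = (fun h => h^-1 *: ((F \o shift (t *: e + b)) (h *: e) - F (t *: e + b))).
Proof.
apply/funext => h /=. have -> : h%:A = h by rewrite /GRing.scale /= mulr1.
by rewrite scalerDl addrA.
Qed.

Lemma line_derivable F e b (t : R) :
  derivable (fun u : R => F (u *: e + b)) t 1 = derivable F (t *: e + b) e.
Proof. by rewrite /derivable dq_line. Qed.

Lemma line_derive F e b (t : R) :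
  'D_1 (fun u : R => F (u *: e + b)) t = 'D_e F (t *: e + b).
Proof. by rewrite /derive dq_line. Qed.

Lemma ln_diff (x : R) : 0 < x -> differentiable (@ln R) x.
Proof.
move=> x0; apply/derivable1_diffP; by case: (is_derive1_ln x0).
Qed.

Lemma score_formula (F : 'rV[R]_n -> R) e x :
  (forall z, differentiable F z) -> (forall z, 0 <= F z) ->
  (forall z z', (0 < F z) = (0 < F z')) ->
  'D_e (fun r' => ln (F r')) x = 'D_e F x / F x.
Proof.
move=> dF F0 Fsupp.
have [Fx0|] := ltP 0 (F x); last first.
  move=> Fxle.
  have Fz : forall z, F z = 0.
    move=> z; apply/eqP; rewrite eq_le F0 andbT leNgt (Fsupp z x).
    by rewrite -leNgt.
  have -> : F = cst 0 by apply/funext => z; rewrite Fz.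
  have -> : (fun r' => ln (@cst 'rV[R]_n R 0 r')) = cst (ln 0) by [].
  by rewrite !derive_cst mul0r.
pose G := fun u : R => F (u *: e + x).
have dG : derivable G 0 1.
  rewrite line_derivable; apply: diff_derivable; exact: dF.
have G0 : G 0 = F x by rewrite /G scale0r add0r.
have dln : derivable (@ln R) (G 0) 1 by rewrite G0; case: (is_derive1_ln Fx0).
have := derive1_comp dG dln.
rewrite G0.
rewrite !derive1E.
have := line_derive (fun r' => ln (F r')) e x 0.
have := line_derive F e x 0.
rewrite scale0r add0r => <- <-.
have [_ ->] := is_derive1_ln Fx0.
by rewrite mulrC => <-.
Qed.
End M.
Lemma maxpn (R : realType) (x : R) : Num.max x 0 - Num.max (- x) 0 = x.
Proof.
rewrite !maxEle.
by case: ifPn => h1; case: ifPn => h2; rewrite -?ltNge in h1 h2; lra.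
Qed.

Lemma int_pos (R : realType) (d : measure_display) (Y : measurableType d)
  (mu : {measure set Y -> \bar R}) (p g w : Y -> R) :
  mu.-integrable setT (EFin \o p) -> (\int[mu]_y (p y)%:E = 0)%E ->
  measurable_fun setT g -> measurable_fun setT w -> (forall y, 0 <= w y) ->
  (\int[mu]_y (w y)%:E = 1)%E ->
  (forall y, p y <= g y) -> (forall y, 0 < w y -> p y < g y) ->
  (0 < \int[mu]_y (g y)%:E)%E.
Proof.
move=> ip p0 mg mw w0 w1 pg pgs.
have mp : measurable_fun setT p by apply/measurable_EFinP; exact: measurable_int ip.
pose k y := g y - p y.
have mk : measurable_fun setT k by exact: measurable_funB.
have k0 : forall y, 0 <= k y by move=> y; rewrite /k subr_ge0.
have mpos : forall h : Y -> R, measurable_fun setT h ->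
    measurable_fun setT (fun y => (Num.max (h y) 0)%:E).
  move=> h mh; apply/measurable_EFinP; exact: (measurable_funrpos mh).
have mneg : forall h : Y -> R, measurable_fun setT h ->
    measurable_fun setT (fun y => (Num.max (- h y) 0)%:E).
  move=> h mh; apply/measurable_EFinP; exact: (measurable_funrneg mh).
have intE : forall h : Y -> R, (\int[mu]_y (h y)%:E =
    \int[mu]_y (Num.max (h y) 0)%:E - \int[mu]_y (Num.max (- h y) 0)%:E)%E.
  move=> h; rewrite integralE.
  by congr (_ - _)%E; congr (integral _ _ _); apply/funext => y; rewrite ?funeposE ?funenegE /= ?EFin_max ?EFinN.
set A := (\int[mu]_y (Num.max (g y) 0)%:E)%E.
set B := (\int[mu]_y (Num.max (- g y) 0)%:E)%E.
set P := (\int[mu]_y (Num.max (p y) 0)%:E)%E.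
set N := (\int[mu]_y (Num.max (- p y) 0)%:E)%E.
set K := (\int[mu]_y (k y)%:E)%E.
have Pfin : P \is a fin_num.
  rewrite fin_numElt; apply/andP; split.
    by apply: (lt_le_trans _ (integral_ge0 _ _)) => // y _; rewrite lee_fin le_max lexx orbT.
  have := integral_funepos_lt_pinfty measurableT ip.
  by rewrite funerpos.
have Nfin : N \is a fin_num.
  rewrite fin_numElt; apply/andP; split.
    by apply: (lt_le_trans _ (integral_ge0 _ _)) => // y _; rewrite lee_fin le_max lexx orbT.
  have := integral_funeneg_lt_pinfty measurableT ip.
  by rewrite funerneg.
have PN : P = N.
  move: p0; rewrite intE -/P -/N => /eqP; rewrite sube_eq ?add0e //.
    by move/eqP.
have B0 : (0 <= B)%E by apply: integral_ge0 => y _; rewrite lee_fin le_max lexx orbT.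
have BN : (B <= N)%E.
  apply: ge0_le_integral => //; [by move=> y _; rewrite lee_fin le_max lexx orbT|exact: mneg|exact: mneg|].
  move=> y _; rewrite lee_fin; apply: (funrneg_le (D := setT) (f := p) (g := g)); last exact: in_setT.
  by move=> z _; exact: pg.
have Bfin : B \is a fin_num.
  rewrite fin_numElt; apply/andP; split; first by apply: (lt_le_trans _ B0).
  by apply: (le_lt_trans BN); move: Nfin; rewrite fin_numElt => /andP[].
have iden : (A + N = K + B + P)%E.
  rewrite -ge0_integralD //; last 4 first.
  - by move=> y _; rewrite lee_fin le_max lexx orbT.
  - exact: mpos.
  - by move=> y _; rewrite lee_fin le_max lexx orbT.
  - exact: mneg.
  rewrite -ge0_integralD //; last 4 first.
  - by move=> y _; rewrite lee_fin.
  - exact/measurable_EFinP.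
  - by move=> y _; rewrite lee_fin le_max lexx orbT.
  - exact: mneg.
  rewrite -ge0_integralD //; last 4 first.
  - by move=> y _; rewrite adde_ge0 // lee_fin ?le_max ?lexx ?orbT.
  - apply: emeasurable_funD; [exact/measurable_EFinP|exact: mneg].
  - by move=> y _; rewrite lee_fin le_max lexx orbT.
  - exact: mpos.
  congr (integral _ _ _); apply/funext => y; rewrite /= -!EFinD; congr EFin.
  have := maxpn (g y); have := maxpn (p y); rewrite /k; lra.
have AKB : A = (K + B)%E.
  by rewrite -(addeK (K + B) Pfin) -iden PN addeK.
have -> : (\int[mu]_y (g y)%:E = K)%E by rewrite intE -/A -/B AKB addeK.
have K0 : (0 <= K)%E by apply: integral_ge0 => y _; rewrite lee_fin.
rewrite lt_neqAle K0 andbT eq_sym; apply/negP => /eqP K0'.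
have : ae_eq mu setT (EFin \o k) (cst 0%E).
  apply/ae_eq_integral_abs => //; first exact/measurable_EFinP.
  rewrite -K0'; congr (integral _ _ _); apply/funext => y /=.
  by rewrite ger0_norm.
move=> ae.
have : ae_eq mu setT (EFin \o w) (cst 0%E).
  apply: filterS ae => y /= H _; have {}H := H I.
  case: (ltP 0 (w y)) => wy.
    by move: (pgs y wy) H; rewrite /k => h1 [] h2; exfalso; clear -h1 h2; lra.
  by congr EFin; apply/eqP; rewrite eq_le wy w0.
move=> aw.
have : (\int[mu]_y (w y)%:E = \int[mu]_y (cst 0%E y))%E.
  apply: (ae_eq_integral (cst 0%E) (EFin \o w) measurableT) => //; exact/measurable_EFinP.
by rewrite w1 integral0 => /eqP; rewrite onee_eq0.
Qed.

Lemma minv (R : realType) : measurable_fun setT (@GRing.inv R).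
Proof.
rewrite -(setUv [set (0:R)]).
apply/measurable_funU => //.
  exact: measurableC.
split; first exact: measurable_fun_set1.
apply: open_continuous_measurable_fun.
  rewrite openC; apply: accessible_closed_set1; exact: hausdorff_accessible.
move=> x; rewrite inE /= => /eqP x0. exact: (@continuousV _ _ id x x0 (fun A => id)).
Qed.
Lemma intN_le (R : realType) (d : measure_display) (Y : measurableType d)
  (mu : {measure set Y -> \bar R}) (p g : Y -> R) :
  mu.-integrable setT (EFin \o p) -> measurable_fun setT g ->
  (forall y, g y <= p y) ->
  (\int[mu]_y (- g y)%:E = - \int[mu]_y (g y)%:E)%E.
Proof.
move=> ip mg gp.
have fin : (\int[mu]_y ((EFin \o g)^\+ y))%E \is a fin_num.
  rewrite ge0_fin_numE; last by apply: integral_ge0.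
  apply: le_lt_trans (integral_funepos_lt_pinfty measurableT ip).
  apply: ge0_le_integral => //.
  - apply: measurable_funepos; exact/measurable_EFinP.
  - apply: measurable_funepos; exact: measurable_int ip.
  - move=> y _; rewrite !funerpos /= lee_fin.
    apply: (funrpos_le (D := setT)); last exact: in_setT.
    by move=> z _; exact: gp.
rewrite -integralN; first by congr (integral _ _ _); apply/funext => y; rewrite EFinN.
exact: fin_num_adde_defr.
Qed.

Unset Implicit Arguments.
Theorem proposition5 (R : realType) (d : measure_display) (Y : measurableType d)
  (mu : {measure set Y -> \bar R}) (n : nat) (f : Y -> 'rV[R]_n -> R)
  (hf : regular_model mu f) (i : 'I_n) (s r : 'rV[R]_n)
  (hr : forall j : 'I_n, j != i -> r 0 j = s 0 j) :
  let E := (\int[mu]_y ((f y s) * score f i r y)%:E)%E in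
  [/\ r 0 i < s 0 i -> (0 < E)%E,
      r 0 i = s 0 i -> E = 0%E &
      s 0 i < r 0 i -> (E < 0)%E].
Proof.
move=> E.
case: hf => f0 [fm [f1 [ftd [fsupp [fconc fint]]]]].
set e : 'rV[R]_n := unitv i.
have dF : forall y z, differentiable (f y) z by move=> y z; have [] := ftd y z.
have sf : forall x y, score f i x y = partial i (f y) x / f y x.
  move=> x y; rewrite /score /partial; apply: score_formula.
  - exact: dF.
  - exact: f0.
  - by move=> z z'; exact: fsupp.
have zero : forall y, ~ (0 < f y s) -> forall x, f y x = 0.
  move=> y hy x; apply/eqP; rewrite eq_le f0 andbT leNgt (fsupp y x s).
  by apply/negP.
pose p y := partial i (f y) s.
have ip : mu.-integrable setT (EFin \o p) by case: (fint s i).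
have p0 : (\int[mu]_y (p y)%:E = 0)%E.
  case: (fint s i) => _ hd.
  have c1 : (fun s' => Rintegral mu setT (fun y => f y s')) = cst 1.
    by apply/funext => s'; rewrite /Rintegral f1.
  rewrite c1 in hd; case: hd => _; rewrite derive_cst => hv.
  rewrite -[LHS]fineK; last exact: integrable_fin_num.
  by rewrite -/(Rintegral mu setT p) -hv.
have pE : forall y, f y s * score f i s y = p y.
  move=> y; rewrite sf.
  have [fy|fy] := boolP (0 < f y s).
    by rewrite mulrC divfK // gt_eqF.
  have fz := zero y (elimN idP fy).
  rewrite fz mul0r /p /partial.
  have -> : f y = cst 0 by apply/funext => z; rewrite fz.
  by rewrite derive_cst.
pose t := r 0 i - s 0 i.
have rE : r = t *: e + s.
  apply/rowP => j; rewrite !mxE /t.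
  case: (eqVneq j i) => [->|ji]; first by rewrite eqxx /= mulr1; ring.
  by rewrite andbF mulr0 add0r hr.
have e_i : e 0 i = 1 by rewrite /e /unitv mxE !eqxx.
have mono : forall y, 0 < f y s -> forall a b : R, a < b ->
    score f i (b *: e + s) y < score f i (a *: e + s) y.
  move=> y fy a b ab.
  pose psi := fun u : R => ln (f y (u *: e + s)).
  have spsi : forall u, score f i (u *: e + s) y = 'D_1 psi u.
    by move=> u; rewrite /score /partial -(line_derive (fun r' => ln (f y r')) e s u).
  have der : forall u : R, is_derive u 1 psi ('D_1 psi u).
    move=> u; apply: derivableP; apply/derivable1_diffP.
    have dG : differentiable (fun v : R => f y (v *: e + s)) u.
      by apply/derivable1_diffP; rewrite line_derivable; apply: diff_derivable; exact: dF.
    have dl : differentiable (@ln R) (f y (u *: e + s)).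
      by apply: ln_diff; rewrite (fsupp y _ s).
    exact: (differentiable_comp dG dl).
  have sc : sconc psi.
    move=> x1 x2 tt x12 tt01; rewrite /psi.
    have ab' : x1 *: e + s != x2 *: e + s.
      apply/negP => /eqP hab; move: x12; rewrite (_ : x1 = x2) ?eqxx //.
      have := congr1 (fun M : 'rV[R]_n => M 0 i) hab; rewrite !mxE !eqxx /=.
      by rewrite !mulr1 => /addIr.
    have := fconc y s fy _ _ ab' tt tt01.
    suff -> : (1 - tt) *: (x1 *: e + s) + tt *: (x2 *: e + s) = ((1 - tt) * x1 + tt * x2) *: e + s by [].
    by apply/rowP => j; rewrite !mxE; ring.
  rewrite !spsi; exact: (sconc_deriv sc (der a) (der b) ab).
have mg : measurable_fun setT (fun y => f y s * score f i r y).
  rewrite (_ : (fun y => _) = (fun y => f y s * (partial i (f y) r * (f y r)^-1))); last first.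
    by apply/funext => y; rewrite sf.
  apply: measurable_funM; first exact: fm.
  apply: measurable_funM.
    have := (fint r i).1 => /measurable_int; exact: (measurable_EFinP _ _).1.
  apply: (@measurableT_comp _ _ _ _ _ _ (@GRing.inv R)); [exact: minv | exact: fm].
have offS : forall y, ~ (0 < f y s) -> f y s * score f i r y = p y.
  move=> y hy; rewrite -pE (zero y hy s) !mul0r //.
have sS : s = 0 *: e + s by rewrite scale0r add0r.
rewrite /E; split.
- move=> lt.
  have t0 : t < 0 by rewrite /t subr_lt0.
  have key : forall y, 0 < f y s -> p y < f y s * score f i r y.
    move=> y fy; rewrite -pE ltr_pM2l // rE {1}sS.
    exact: mono.
  apply: (int_pos ip p0 mg (fm s) (fun y => f0 y s) (f1 s)) => //.
  move=> y; have [fy|fy] := boolP (0 < f y s); first exact/ltW/key.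
  by rewrite offS //; apply/negP.
- move=> eq.
  have -> : r = s by rewrite rE /t eq subrr scale0r add0r.
  rewrite -p0; congr (integral _ _ _); apply/funext => y; by rewrite pE.
- move=> gt.
  have t0 : 0 < t by rewrite /t subr_gt0.
  have key : forall y, 0 < f y s -> f y s * score f i r y < p y.
    move=> y fy; rewrite -pE ltr_pM2l // rE {2}sS.
    exact: mono.
  have gp : forall y, f y s * score f i r y <= p y.
    move=> y; have [fy|fy] := boolP (0 < f y s); first exact/ltW/key.
    by rewrite offS //; apply/negP.
  rewrite -oppe_gt0 -(intN_le ip mg gp).
  apply: (int_pos (p := fun y => - p y) _ _ _ (fm s) (fun y => f0 y s) (f1 s)).
  + exact: (integrableN ip).
  + rewrite (intN_le ip (p := p)) ?p0 ?oppe0 //.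
      by apply/measurable_EFinP; exact: measurable_int ip.
  + exact: measurable_funN.
  + by move=> y; rewrite lerN2.
  + by move=> y fy; rewrite ltrN2; exact: key.
Qed.
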